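(* Let $M,N_c,N_g$ be positive integers with $N_g\le N_c$, let $T_s>0$, and let $S_k^{AD}:[-\pi/2,\pi/2]\times\{0,T_s,\dots,(N_g-1)T_s\}\to[0,\infty)$ be bounded and, for each delay, Riemann integrable in $\theta$. Define the space-frequency channel covariance matrix $$\mathbf{R}_k=\sum_{q=0}^{N_g-1}\int_{-\pi/2}^{\pi/2}\left[\mathbf{f}_{N_c,q}\otimes\mathbf{v}_{M,\theta}\right]\left[\mathbf{f}_{N_c,q}\otimes\mathbf{v}_{M,\theta}\right]^{H} S_k^{AD}(\theta,qT_s)\,d\theta\in\mathbb{C}^{MN_c\times MN_c}.$$ Define $\mathbf{V}_M\in\mathbb{C}^{M\times M}$ by $[\mathbf{V}_M]_{i,j}=\frac{1}{\sqrt{M}}\exp\!\left(-\jmath 2\pi\frac{i(j-M/2)}{M}\right)$ and $\boldsymbol{\Omega}_k\in\mathbb{R}^{M\times N_g}$ by $$[\boldsymbol{\Omega}_k]_{i,j}=MN_c(\theta_{i+1}-\theta_i)\,S_k^{AD}(\theta_i,\tau_j),\qquad \theta_m=\arcsin(2m/M-1),\ \tau_n=nT_s.$$ Then, for fixed non-negative integers $i$ and $j$, $$\lim_{M\to\infty}\Big[\mathbf{R}_k-\left(\mathbf{F}_{N_c\times N_g}\otimes\mathbf{V}_M\right)\mathrm{diag}\{\mathrm{vec}(\boldsymbol{\Omega}_k)\}\left(\mathbf{F}_{N_c\times N_g}\otimes\mathbf{V}_M\right)^{H}\Big]_{i,j}=0,$$ i.e. as $M\to\infty$, $\mathbf{R}_k$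 tends entrywise to $\left(\mathbf{F}_{N_c\times N_g}\otimes\mathbf{V}_M\right)\mathrm{diag}\{\mathrm{vec}(\boldsymbol{\Omega}_k)\}\left(\mathbf{F}_{N_c\times N_g}\otimes\mathbf{V}_M\right)^{H}$.
   Context: $\jmath=\sqrt{-1}$. Matrix/vector element indices start at $0$. $\mathbf{F}_N$ is the $N\times N$ unitary DFT matrix, $[\mathbf{F}_N]_{i,j}=\frac{1}{\sqrt N}e^{-\jmath 2\pi ij/N}$; $\mathbf{F}_{N\times G}$ is the matrix of the first $G$ columns of $\mathbf{F}_N$; $\mathbf{f}_{N,q}$ is the $q$th column of $\sqrt{N}\mathbf{F}_N$. The array response vector is $\mathbf{v}_{M,\theta}=[1,\ e^{-\jmath\pi\sin\theta},\ \dots,\ e^{-\jmath\pi(M-1)\sin\theta}]^T\in\mathbb{C}^{M}$. $\otimes$ is the Kronecker product, $\mathrm{vec}(\cdot)$ stacks columns, $\mathrm{diag}\{\mathbf{x}\}$ is the diagonal matrix with $\mathbf{x}$ on its diagonal. $S_k^{AD}(\theta,\tau)$ is the power angle-delay spectrum of user $k$. *)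

(* Defs.v *)
From Stdlib Require Import Reals.
From Coquelicot Require Import Coquelicot.
Open Scope R_scope.

Definition cexpi (x : R) : C := (cos x, sin x).

(* Matrices are represented as functions of (0-based) nat indices. *)

Definition arr_resp (M : nat) (theta : R) (m : nat) : C :=
  cexpi (- PI * INR m * sin theta).

(* f_{N,q}: q-th column of sqrt(N) F_N, entry n *)
Definition fcol (N q n : nat) : C := cexpi (- 2 * PI * INR n * INR q / INR N).

Definition kron_vec (M : nat) (x y : nat -> C) (a : nat) : C :=
  Cmult (x (a / M)%nat) (y (a mod M)%nat).

Definition Rk (M Nc Ng : nat) (Ts : R) (S : R -> R -> R) (a b : nat) : C :=
  sum_n (fun q =>
    RInt (V := C_R_CompleteNormedModule)
      (fun theta =>
         Cmult (Cmult (kron_vec M (fcol Nc q) (arr_resp M theta) a)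
                      (Cconj (kron_vec M (fcol Nc q) (arr_resp M theta) b)))
               (RtoC (S theta (INR q * Ts))))
      (- (PI / 2)) (PI / 2)) (Ng - 1).

Definition VM (M i j : nat) : C :=
  Cmult (RtoC (/ sqrt (INR M)))
        (cexpi (- 2 * PI * INR i * (INR j - INR M / 2) / INR M)).

(* F_{Nc x Ng}: first Ng columns of the unitary DFT matrix F_Nc *)
Definition Fsub (Nc n q : nat) : C :=
  Cmult (RtoC (/ sqrt (INR Nc))) (cexpi (- 2 * PI * INR n * INR q / INR Nc)).

Definition kron_mx (p r : nat) (A B : nat -> nat -> C) (a c : nat) : C :=
  Cmult (A (a / p)%nat (c / r)%nat) (B (a mod p)%nat (c mod r)%nat).

Definition theta_grid (M m : nat) : R := asin (2 * INR m / INR M - 1).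

Definition Omega (M Nc : nat) (Ts : R) (S : R -> R -> R) (i j : nat) : R :=
  INR M * INR Nc * (theta_grid M (Nat.succ i) - theta_grid M i)
  * S (theta_grid M i) (INR j * Ts).

Definition vec_mx (M : nat) (Om : nat -> nat -> R) (c : nat) : R :=
  Om (c mod M)%nat (c / M)%nat.

Definition Rk_approx (M Nc Ng : nat) (Ts : R) (S : R -> R -> R) (a b : nat) : C :=
  let A := kron_mx M M (Fsub Nc) (VM M) in
  sum_n (fun c =>
    Cmult (Cmult (A a c) (RtoC (vec_mx M (Omega M Nc Ts S) c)))
          (Cconj (A b c))) (M * Ng - 1).

(* Main.v *)
Require Import Defs.
From Stdlib Require Import Reals Lra Lia.
From Coquelicot Require Import Coquelicot.
Open Scope R_scope.

Definition Pt (x : nat -> R) (k n : nat) : @SF_seq R :=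
  mkSF_seq (x k) (seq.map (fun m => (x (S m), x m)) (seq.iota k n)).

Lemma Pt_lx x k n : SF_lx (Pt x k n) = seq.map x (seq.iota k (S n)).
Proof.
  revert k; induction n as [|n IH]; intros k; [reflexivity|].
  specialize (IH (S k)). unfold Pt, SF_lx in *; simpl in *.
  f_equal. exact IH.
Qed.

Lemma Pt_ly x k n : SF_ly (Pt x k n) = seq.map x (seq.iota k n).
Proof.
  revert k; induction n as [|n IH]; intros k; [reflexivity|].
  specialize (IH (S k)). unfold Pt, SF_ly in *; simpl in *. f_equal. exact IH.
Qed.

Lemma Pt_size x k n : SF_size (Pt x k n) = n.
Proof. unfold SF_size, Pt; simpl. rewrite seq.size_map, seq.size_iota. reflexivity. Qed.

Lemma nth_map_iota x k n i : (i < n)%nat -> seq.nth 0 (seq.map x (seq.iota k n)) i = x (k + i)%nat.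
Proof.
  revert k i; induction n as [|n IH]; intros k i Hi; [lia|].
  destruct i as [|i]; simpl. f_equal; lia.
  rewrite IH by lia. f_equal; lia.
Qed.

Lemma last_map_iota (x : nat -> R) k n (d : R) : seq.last d (seq.map x (seq.iota k (S n))) = x (k + n)%nat.
Proof.
  revert k d; induction n as [|n IH]; intros k d. simpl. f_equal; lia.
  change (seq.last (x k) (seq.map x (seq.iota (S k) (S n))) = x (k + S n)%nat).
  rewrite IH. f_equal; lia.
Qed.

Lemma step_map_iota x k n B : 0 <= B -> (forall m, (k <= m < k + n)%nat -> Rabs (x (S m) - x m) <= B) ->
  seq_step (seq.map x (seq.iota k (S n))) <= B.
Proof.
  intros HB. revert k; induction n as [|n IH]; intros k Hx.
  unfold seq_step; simpl. lra.
  unfold seq_step in *. simpl in *. specialize (IH (S k)). simpl in IH.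
  apply Rmax_lub. apply Hx; lia. apply IH. intros; apply Hx; lia.
Qed.

Lemma pointed_Pt x n : (forall m, (m < n)%nat -> x m <= x (S m)) -> pointed_subdiv (Pt x 0 n).
Proof.
  intros Hx i Hi. rewrite Pt_size in Hi. rewrite Pt_lx, Pt_ly.
  rewrite !nth_map_iota by lia. simpl. split; [lra| apply Hx; lia].
Qed.

Fixpoint rs {V : ModuleSpace R_Ring} (T : nat -> V) (k n : nat) : V :=
  match n with O => zero | S n => plus (T k) (rs T (S k) n) end.

Lemma RS_Pt {V : ModuleSpace R_Ring} (h : R -> V) x k n :
  Riemann_sum h (Pt x k n) = rs (fun m => scal (x (S m) - x m) (h (x m))) k n.
Proof.
  revert k; induction n as [|n IH]; intros k.
  reflexivity.
  change (Pt x k (S n)) with (SF_cons (x k, x k) (Pt x (S k) n)).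
  rewrite Riemann_sum_cons, IH. reflexivity.
Qed.

Lemma rs_sum {V : ModuleSpace R_Ring} (T : nat -> V) k n :
  rs T k (S n) = sum_n_m T k (k + n).
Proof.
  revert k; induction n as [|n IH]; intros k.
  simpl. rewrite Nat.add_0_r, sum_n_n, plus_zero_r. reflexivity.
  change (rs T k (S (S n))) with (plus (T k) (rs T (S k) (S n))).
  rewrite IH, (sum_Sn_m T k) by lia. f_equal. f_equal. lia.
Qed.

Lemma RS_conv {V : NormedModule R_AbsRing} (h : R -> V) a b l (x : nat -> nat -> R) :
  a < b -> is_RInt h a b l ->
  (forall M, x M 0%nat = a) -> (forall M, (0 < M)%nat -> x M M = b) ->
  (forall M m, (m < M)%nat -> x M m <= x M (S m)) ->
  (forall d : posreal, eventually (fun M => forall m, (m < M)%nat -> Rabs (x M (S m) - x M m) <= d/2)) ->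
  filterlim (fun M => sum_n (fun m => scal (x M (S m) - x M m) (h (x M m))) (M - 1))
    eventually (locally l).
Proof.
  intros Hab HI Ha Hb Hmono Hstep.
  assert (HP : filterlim (fun M => Pt (x M) 0 M) eventually (Riemann_fine a b)).
  { intros X [d Hd]. unfold filtermap.
    assert (E1 : eventually (fun M : nat => (0 < M)%nat)) by (exists 1%nat; intros; lia).
    generalize (filter_and _ _ E1 (Hstep d)). apply filter_imp.
    intros M [HM HM2]. apply Hd.
    - rewrite Pt_lx. apply Rle_lt_trans with (d/2). apply step_map_iota.
      destruct d; simpl in *; lra. intros m Hm. apply HM2; lia.
      destruct d; simpl; lra.
    - split; [apply pointed_Pt; intros; apply Hmono; lia|].
      rewrite Rmin_left, Rmax_right by lra. split.
      simpl; apply Ha. rewrite Pt_lx. simpl SF_h.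
      destruct M as [|M]; [lia|]. rewrite last_map_iota. simpl. apply Hb; lia. }
  generalize (filterlim_comp _ _ _ (fun M => Pt (x M) 0 M) (fun ptd => scal (sign (b - a)) (Riemann_sum h ptd)) _ _ _ HP HI).
  apply filterlim_ext_loc. exists 1%nat. intros M HM.
  replace (sign (b-a)) with (@one R_Ring) by (rewrite sign_eq_1 by lra; reflexivity). rewrite scal_one, RS_Pt.
  destruct M as [|M]; [lia|]. rewrite rs_sum. simpl. rewrite Nat.sub_0_r. reflexivity.
Qed.

Lemma node_prop a w t : 0 < w -> a <= t ->
  a <= a + w * IZR (Int_part ((t - a) / w)) <= t /\ t - (a + w * IZR (Int_part ((t - a) / w))) < w.
Proof.
  intros Hw Ht. set (z := (t - a) / w).
  assert (Hz : 0 <= z) by (unfold z; apply Rdiv_le_0_compat; lra).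
  destruct (base_Int_part z) as [H1 H2].
  assert (H3 : (0 <= Int_part z)%Z).
  { apply le_IZR. assert (-1 < IZR (Int_part z)) by lra.
    assert (-1 < Int_part z)%Z by (apply lt_IZR; exact H). apply IZR_le. lia. }
  apply IZR_le in H3.
  assert (Et : t = a + w * z) by (unfold z; field; lra).
  split; [split|].
  - nra.
  - rewrite Et. nra.
  - rewrite Et. nra.
Qed.

Lemma node_eq a w t (n : nat) : 0 < w -> a + INR n * w < t < a + INR (S n) * w ->
  a + w * IZR (Int_part ((t - a) / w)) = a + INR n * w.
Proof.
  intros Hw Ht. rewrite S_INR in Ht.
  assert (E : Int_part ((t - a) / w) = Z.of_nat n).
  { symmetry. apply Int_part_spec. rewrite <- INR_IZR_INZ. split.
    - apply Rlt_minus_l. apply Rmult_lt_reg_r with w; auto.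
      unfold Rdiv. rewrite Rmult_assoc, Rinv_l, Rmult_1_r by lra. nra.
    - apply Rmult_le_reg_r with w; auto.
      unfold Rdiv. rewrite Rmult_assoc, Rinv_l, Rmult_1_r by lra. nra. }
  rewrite E, <- INR_IZR_INZ. ring.
Qed.

Lemma ex_RInt_mult_cont (phi f : R -> R) a b : a < b -> ex_RInt f a b ->
  (forall x, a <= x <= b -> continuity_pt phi x) -> ex_RInt (fun t => phi t * f t) a b.
Proof.
  intros Hab Hf Hphi.
  destruct (ex_RInt_ub f a b Hf) as [Bf HBf].
  rewrite Rmin_left, Rmax_right in HBf by lra.
  set (B := Rabs Bf + 1).
  assert (HB : 0 < B) by (unfold B; generalize (Rabs_pos Bf); lra).
  assert (HBf' : forall t, a <= t <= b -> Rabs (f t) <= B).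
  { intros t Ht. specialize (HBf t Ht). unfold B. generalize (Rle_abs Bf).
    change (norm (f t)) with (Rabs (f t)) in HBf. lra. }
  set (F := filtermap (fun ptd => scal (sign (b - a)) (Riemann_sum (fun t => phi t * f t) ptd)) (Riemann_fine a b)).
  assert (FF : ProperFilter F) by (apply filtermap_proper_filter, Riemann_fine_filter).
  assert (Hc : cauchy F).
  { intros eps.
    assert (Heta : 0 < eps / (8 * B * (b - a))).
    { apply Rdiv_lt_0_compat. destruct eps; simpl; lra. apply Rmult_lt_0_compat; lra. }
    destruct (Heine_cor1 Hab Hphi (mkposreal _ Heta)) as [delta [Hd1 Hd2]].
    simpl in Hd2.
    assert (Hdab : 0 < delta / (b - a)) by (apply Rdiv_lt_0_compat; [destruct delta; simpl; lra| lra]).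
    destruct (archimed_cor1 _ Hdab) as [K [HK1 HK2]].
    assert (HKpos : 0 < INR K) by (apply lt_0_INR; lia).
    set (w := (b - a) / INR K).
    assert (Hw : 0 < w) by (unfold w; apply Rdiv_lt_0_compat; lra).
    assert (Hwd : w < delta).
    { unfold w. apply Rmult_lt_reg_r with (/ (b - a)). apply Rinv_0_lt_compat; lra.
      replace ((b - a) / INR K * / (b - a)) with (/ INR K) by (field; lra). exact HK1. }
    set (G := fun t => phi (a + w * IZR (Int_part ((t - a) / w)))).
    assert (HG : forall t, a <= t <= b -> Rabs (phi t - G t) < eps / (8 * B * (b - a))).
    { intros t Ht. destruct (node_prop a w t Hw (proj1 Ht)) as [[N1 N2] N3].
      unfold G. apply Hd2; try lra. rewrite Rabs_pos_eq by lra. lra. }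
    assert (HGi : ex_RInt (fun t => G t * f t) a b).
    { assert (Hind : forall n, (n <= K)%nat -> ex_RInt (fun t => G t * f t) a (a + INR n * w)).
      { induction n as [|n IH]; intros Hn.
        - simpl. rewrite Rmult_0_l, Rplus_0_r. apply ex_RInt_point.
        - assert (Hn' : INR (S n) * w <= b - a).
          { unfold w. apply le_INR in Hn. rewrite S_INR in *.
            replace ((INR n + 1) * ((b - a) / INR K)) with ((b - a) * ((INR n + 1) / INR K)) by (field; lra).
            rewrite <- (Rmult_1_r (b - a)) at 2. apply Rmult_le_compat_l. lra.
            apply Rmult_le_reg_r with (INR K); auto. unfold Rdiv.
            rewrite Rmult_assoc, Rinv_l, Rmult_1_r by lra. lra. }
          assert (Hn0 : 0 <= INR n * w) by (apply Rmult_le_pos; [apply pos_INR|lra]).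
          rewrite S_INR in Hn'.
          apply ex_RInt_Chasles with (a + INR n * w). apply IH; lia.
          apply ex_RInt_ext with (fun t => scal (phi (a + INR n * w)) (f t)).
          + intros t Ht. rewrite S_INR in Ht. rewrite Rmin_left, Rmax_right in Ht by lra.
            unfold G. rewrite (node_eq a w t n Hw) by (rewrite S_INR; lra). reflexivity.
          + apply (ex_RInt_scal (V := R_NormedModule) f).
            apply (ex_RInt_Chasles_1 (V := R_CompleteNormedModule) f _ _ b). rewrite S_INR. lra.
            apply (ex_RInt_Chasles_2 (V := R_CompleteNormedModule) f a). lra. exact Hf. }
      assert (Eb : a + INR K * w = b) by (unfold w; field; lra).
      generalize (Hind K (le_n K)). rewrite Eb. auto. }
    destruct HGi as [c Hc].
    exists c. unfold F, filtermap.
    assert (Heps4 : 0 < eps / 4) by (destruct eps; simpl; lra).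
    assert (E1 := proj1 (filterlim_locally _ _) Hc (mkposreal _ Heps4)).
    assert (E2 : Riemann_fine a b (fun ptd => pointed_subdiv ptd /\ SF_h ptd = Rmin a b /\ seq.last (SF_h ptd) (SF_lx ptd) = Rmax a b)).
    { unfold Riemann_fine, within. exists (mkposreal 1 Rlt_0_1). intros y _ H; exact H. }
    generalize (filter_and _ _ E1 E2). apply filter_imp.
    intros ptd [H1 [Hp [Hh Hl]]].
    rewrite Rmin_left in Hh by lra. rewrite Rmax_right in Hl by lra.
    replace (sign (b-a)) with (@one R_Ring) in * by (rewrite sign_eq_1 by lra; reflexivity).
    rewrite scal_one in *.
    assert (Hn := Riemann_sum_norm (V:=R_NormedModule) (fun t => minus (phi t * f t) (G t * f t)) (fun _ => eps/(8*B*(b-a)) * B) ptd Hp).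
    assert (Hpt : forall t, SF_h ptd <= t <= seq.last (SF_h ptd) (SF_lx ptd) ->
       norm (minus (phi t * f t) (G t * f t)) <= eps/(8*B*(b-a)) * B).
    { intros t Ht. rewrite Hl, Hh in Ht.
        change (norm (minus (phi t * f t) (G t * f t))) with (Rabs (phi t * f t - G t * f t)).
        replace (phi t * f t - G t * f t) with ((phi t - G t) * f t) by ring.
        rewrite Rabs_mult. apply Rmult_le_compat; try apply Rabs_pos.
        apply Rlt_le, HG; exact Ht. apply HBf'; exact Ht. }
    specialize (Hn Hpt).
    rewrite (Riemann_sum_minus (V := R_ModuleSpace)), (Riemann_sum_const (V := R_ModuleSpace)), Hl, Hh in Hn.
    assert (Hn2 : Rabs (Riemann_sum (fun t : R => phi t * f t) ptd - Riemann_sum (fun t : R => G t * f t) ptd) <= eps / 8).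
    { eapply Rle_trans. apply Hn.
      change (scal (b - a) (eps / (8 * B * (b - a)) * B)) with ((b - a) * (eps / (8 * B * (b - a)) * B)).
      right. field. lra. }
    revert H1 Hn2. set (u := Riemann_sum (fun t : R => phi t * f t) ptd).
    set (v := Riemann_sum (fun t : R => G t * f t) ptd).
    change (Rabs (v - c) < eps / 4 -> Rabs (u - v) <= eps / 8 -> Rabs (u - c) < eps).
    intros Q1 Q2.
    replace (u - c) with ((u - v) + (v - c)) by ring.
    eapply Rle_lt_trans. apply Rabs_triang. destruct eps; simpl in *; lra. }
  exists (lim F). unfold is_RInt. apply filterlim_locally. intros eps.
  apply (complete_cauchy F FF Hc eps).
Qed.

Lemma sin_le_mono x y : - (PI/2) <= x -> x <= y -> y <= PI/2 -> sin x <= sin y.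
Proof.
  intros. destruct (Req_dec x y) as [->|Hne]; [lra|].
  left. apply sin_increasing_1; lra.
Qed.

Lemma sin_gap x y e : - (PI/2) <= y -> y <= x -> x <= PI/2 -> 0 < e -> e <= x - y ->
  1 - cos e <= sin x - sin y.
Proof.
  intros H1 H2 H3 He Hd. set (d := x - y).
  assert (E : sin x - sin y = 2 * sin (d/2) * sin ((PI - x - y)/2)).
  { rewrite <- (cos_shift x), <- (cos_shift y), form2.
    replace ((PI / 2 - x - (PI / 2 - y)) / 2) with (- (d/2)) by (unfold d; field).
    replace ((PI / 2 - x + (PI / 2 - y)) / 2) with ((PI - x - y)/2) by field.
    rewrite sin_neg. ring. }
  assert (Hs0 : 0 <= sin (d/2)) by (apply sin_ge_0; unfold d; lra).
  assert (Hs : sin (d/2) <= sin ((PI - x - y)/2)).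
  { destruct (Rle_dec ((PI - x - y)/2) (PI/2)) as [Hl|Hl].
    - apply sin_le_mono; unfold d in *; lra.
    - rewrite <- (sin_PI_x ((PI - x - y)/2)). apply sin_le_mono; unfold d in *; lra. }
  assert (Hc : cos d <= cos e).
  { destruct (Req_dec e d) as [->|Hne]; [lra|].
    left. apply cos_decreasing_1; unfold d in *; lra. }
  assert (E2 : cos d = 1 - 2 * sin (d/2) * sin (d/2)).
  { rewrite <- cos_2a_sin. f_equal. field. }
  rewrite E. nra.
Qed.

Lemma asin_le_mono u v : -1 <= u -> u <= v -> v <= 1 -> asin u <= asin v.
Proof.
  intros H0 H1 H2. destruct (Rle_dec (asin u) (asin v)) as [H|H]; auto.
  exfalso. assert (H3 : asin v < asin u) by lra.
  generalize (asin_bound u) (asin_bound v); intros H4 H5.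
  assert (H6 : sin (asin v) < sin (asin u)) by (apply sin_increasing_1; lra).
  rewrite !sin_asin in H6 by lra. lra.
Qed.

Definition th (M m : nat) : R := asin (2 * INR m / INR M - 1).

Lemma th_0 M : th M 0 = - (PI/2).
Proof.
  unfold th. simpl. replace (2 * 0 / INR M - 1) with (Ropp 1) by (unfold Rdiv; ring).
  rewrite asin_opp, asin_1. reflexivity.
Qed.

Lemma th_M M : (0 < M)%nat -> th M M = PI/2.
Proof.
  intros HM. apply lt_0_INR in HM. unfold th.
  replace (2 * INR M / INR M - 1) with 1 by (field; lra). apply asin_1.
Qed.

Lemma th_arg M m : (0 < M)%nat -> (m <= M)%nat -> -1 <= 2 * INR m / INR M - 1 <= 1.
Proof.
  intros HM Hm. apply lt_0_INR in HM. apply le_INR in Hm.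
  assert (0 <= INR m / INR M <= 1).
  { split. apply Rdiv_le_0_compat; [apply pos_INR|lra].
    apply Rmult_le_reg_r with (INR M); auto. unfold Rdiv.
    rewrite Rmult_assoc, Rinv_l, Rmult_1_r by lra. lra. }
  unfold Rdiv in *. lra.
Qed.

Lemma th_mono M m : (m < M)%nat -> th M m <= th M (S m).
Proof.
  intros Hm. unfold th. apply asin_le_mono.
  - apply (th_arg M m); lia.
  - rewrite S_INR.
    assert (0 < INR M) by (apply lt_0_INR; lia).
    unfold Rdiv. apply Rplus_le_compat_r. apply Rmult_le_compat_r.
    left; apply Rinv_0_lt_compat; lra. lra.
  - apply (th_arg M (S m)); lia.
Qed.

Lemma th_step (d : posreal) : eventually (fun M => forall m, (m < M)%nat -> Rabs (th M (S m) - th M m) <= d/2).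
Proof.
  set (e := Rmin (d/2) PI).
  assert (He : 0 < e) by (unfold e; apply Rmin_glb_lt; [destruct d; simpl; lra| apply PI_RGT_0]).
  assert (He2 : e <= PI) by (unfold e; apply Rmin_r).
  assert (Hce : 0 < 1 - cos e).
  { assert (cos e < cos 0) by (apply cos_decreasing_1; lra). rewrite cos_0 in H. lra. }
  assert (Hq : 0 < (1 - cos e) / 2) by lra.
  destruct (archimed_cor1 _ Hq) as [N [HN1 HN2]].
  exists N. intros M HM m Hm.
  assert (HMpos : 0 < INR M) by (apply lt_0_INR; lia).
  assert (HNM : INR N <= INR M) by (apply le_INR; lia).
  assert (HNpos : 0 < INR N) by (apply lt_0_INR; lia).
  assert (Hmono := th_mono M m Hm).
  rewrite Rabs_pos_eq by lra.
  destruct (Rle_dec (th M (S m) - th M m) e) as [Hl|Hl].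
  - unfold e in Hl. generalize (Rmin_l (d/2) PI). lra.
  - exfalso.
    assert (G := sin_gap (th M (S m)) (th M m) e).
    assert (Hb1 := asin_bound (2 * INR m / INR M - 1)).
    assert (Hb2 := asin_bound (2 * INR (S m) / INR M - 1)).
    unfold th in *.
    rewrite !sin_asin in G by (apply th_arg; lia).
    assert (Hg : 1 - cos e <= 2 * INR (S m) / INR M - 1 - (2 * INR m / INR M - 1)) by (apply G; lra).
    replace (2 * INR (S m) / INR M - 1 - (2 * INR m / INR M - 1)) with (2 / INR M) in Hg
      by (rewrite S_INR; field; lra).
    assert (2 / INR M <= 2 / INR N).
    { unfold Rdiv. apply Rmult_le_compat_l. lra. apply Rinv_le_contravar; lra. }
    assert (2 / INR N < 1 - cos e).
    { unfold Rdiv. replace (1 - cos e) with (2 * ((1 - cos e)/2)) by field.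
      apply Rmult_lt_compat_l; lra. }
    lra.
Qed.

Definition phiA (i j : nat) (t : R) := - PI * (INR i - INR j) * sin t.
Definition Hq (S : R -> R -> R) (Ts : R) (i j q : nat) (t : R) : C :=
  (cos (phiA i j t) * S t (INR q * Ts), sin (phiA i j t) * S t (INR q * Ts)).

Lemma cont_cs (c : R) x : continuity_pt (fun t => cos (c * sin t)) x /\ continuity_pt (fun t => sin (c * sin t)) x.
Proof. split; reg. Qed.

Lemma fcol0 N q : fcol N q 0 = (1, 0).
Proof.
  unfold fcol, cexpi. replace (- 2 * PI * INR 0 * INR q / INR N) with 0 by (simpl; unfold Rdiv; ring).
  rewrite cos_0, sin_0. reflexivity.
Qed.

Lemma integrand_eq M Nc i j q S Ts t : (i < M)%nat -> (j < M)%nat ->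
  Cmult (Cmult (kron_vec M (fcol Nc q) (arr_resp M t) i)
                      (Cconj (kron_vec M (fcol Nc q) (arr_resp M t) j)))
               (RtoC (S t (INR q * Ts))) = Hq S Ts i j q t.
Proof.
  intros Hi Hj. unfold kron_vec.
  rewrite (Nat.div_small i M Hi), (Nat.mod_small i M Hi), (Nat.div_small j M Hj), (Nat.mod_small j M Hj).
  rewrite fcol0. unfold Hq, phiA, arr_resp, cexpi.
  replace (- PI * (INR i - INR j) * sin t) with ((- PI * INR i * sin t) - (- PI * INR j * sin t)) by ring.
  rewrite cos_minus, sin_minus.
  unfold Cmult, Cconj, RtoC; simpl. f_equal; ring.
Qed.

Lemma Hq_ex S Ts i j q : ex_RInt (fun t => S t (INR q * Ts)) (- (PI/2)) (PI/2) ->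
  ex_RInt (V := C_R_NormedModule) (Hq S Ts i j q) (- (PI/2)) (PI/2).
Proof.
  intros Hf.
  assert (Hab : - (PI/2) < PI/2) by (generalize PI_RGT_0; lra).
  apply (ex_RInt_fct_extend_pair (U := R_NormedModule) (V := R_NormedModule) (Hq S Ts i j q)); unfold Hq, phiA; simpl.
  - apply (ex_RInt_mult_cont (fun t => cos (- PI * (INR i - INR j) * sin t))); auto.
    intros; apply cont_cs.
  - apply (ex_RInt_mult_cont (fun t => sin (- PI * (INR i - INR j) * sin t))); auto.
    intros; apply cont_cs.
Qed.

Lemma lim_sum_n {V : NormedModule R_AbsRing} (u : nat -> nat -> V) (l : nat -> V) N :
  (forall q, (q <= N)%nat -> filterlim (fun M => u q M) eventually (locally (l q))) ->
  filterlim (fun M => sum_n (fun q => u q M) N) eventually (locally (sum_n l N)).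
Proof.
  induction N as [|N IH]; intros H.
  - rewrite sum_O. apply filterlim_ext with (fun M => u 0%nat M).
    intros M; rewrite sum_O; reflexivity. apply H; lia.
  - rewrite sum_Sn. apply filterlim_ext with (fun M => plus (sum_n (fun q => u q M) N) (u (S N) M)).
    intros M; rewrite sum_Sn; reflexivity.
    apply (filterlim_comp_2 (F := eventually) _ _ plus (IH (fun q Hq => H q ltac:(lia))) (H (S N) (le_n _))).
    apply filterlim_plus.
Qed.

Lemma sum_n_m_shift {G : AbelianMonoid} (a : nat -> G) k n :
  sum_n_m a k (k + n) = sum_n (fun m => a (k + m)%nat) n.
Proof.
  induction n as [|n IH].
  - rewrite Nat.add_0_r, sum_n_n, sum_O, Nat.add_0_r. reflexivity.
  - rewrite Nat.add_succ_r, sum_n_Sm by lia. rewrite IH, sum_Sn, Nat.add_succ_r. reflexivity.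
Qed.

Lemma sum_reindex {G : AbelianMonoid} (F : nat -> nat -> G) M N : (0 < M)%nat -> (0 < N)%nat ->
  sum_n (fun c => F (c mod M) (c / M))%nat (M * N - 1) = sum_n (fun q => sum_n (fun m => F m q) (M - 1)) (N - 1).
Proof.
  intros HM HN. destruct N as [|n]; [lia|]. clear HN.
  induction n as [|n IH].
  - rewrite Nat.mul_1_r. simpl. rewrite sum_O. apply sum_n_ext_loc.
    intros c Hc. rewrite Nat.mod_small, Nat.div_small by lia. reflexivity.
  - replace (S (S n) - 1)%nat with (S n) by lia. rewrite sum_Sn.
    replace (S n - 1)%nat with n in IH by lia. rewrite <- IH.
    unfold sum_n at 1. rewrite (sum_n_m_Chasles _ 0 (M * S n - 1) (M * S (S n) - 1)) by nia.
    f_equal.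
    replace (S (M * S n - 1)) with (M * S n)%nat by nia.
    replace (M * S (S n) - 1)%nat with (M * S n + (M - 1))%nat by nia.
    rewrite sum_n_m_shift. apply sum_n_ext_loc. intros m Hm.
    replace (M * S n + m)%nat with (m + S n * M)%nat by lia.
    rewrite Nat.div_add, Nat.Div0.mod_add, Nat.mod_small, Nat.div_small by lia. reflexivity.
Qed.

Definition F_term M Nc Ts S i j m q : C :=
  Cmult (Cmult (Cmult (Fsub Nc (i / M)%nat q) (VM M (i mod M)%nat m)) (RtoC (Omega M Nc Ts S m q)))
        (Cconj (Cmult (Fsub Nc (j / M)%nat q) (VM M (j mod M)%nat m))).

Lemma approx_eq M Nc Ng Ts S i j :
  Rk_approx M Nc Ng Ts S i j = sum_n (fun c => F_term M Nc Ts S i j (c mod M) (c / M))%nat (M * Ng - 1).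
Proof. reflexivity. Qed.

Lemma inv_sqrt_sq x : 0 < x -> / sqrt x * / sqrt x * x = 1.
Proof.
  intros Hx. rewrite <- Rinv_mult, sqrt_sqrt by lra. field. lra.
Qed.

Lemma term_eq M Nc Ts S i j m q : (0 < Nc)%nat -> (i < M)%nat -> (j < M)%nat -> (m < M)%nat ->
  F_term M Nc Ts S i j m q =
  scal (theta_grid M (Nat.succ m) - theta_grid M m) (Hq S Ts i j q (theta_grid M m)).
Proof.
  intros HNc Hi Hj Hm.
  assert (HM : 0 < INR M) by (apply lt_0_INR; lia).
  assert (HN : 0 < INR Nc) by (apply lt_0_INR; lia).
  unfold F_term.
  rewrite (Nat.div_small i M Hi), (Nat.mod_small i M Hi), (Nat.div_small j M Hj), (Nat.mod_small j M Hj).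
  change (Fsub Nc 0 q) with (Cmult (RtoC (/ sqrt (INR Nc))) (fcol Nc q 0)).
  rewrite fcol0.
  assert (Hsin : sin (theta_grid M m) = 2 * INR m / INR M - 1).
  { unfold theta_grid. rewrite sin_asin by (apply th_arg; lia). reflexivity. }
  unfold Hq, phiA. rewrite Hsin.
  replace (- PI * (INR i - INR j) * (2 * INR m / INR M - 1)) with
     ((- 2 * PI * INR i * (INR m - INR M / 2) / INR M) - (- 2 * PI * INR j * (INR m - INR M / 2) / INR M))
     by (field; lra).
  rewrite cos_minus, sin_minus.
  assert (Ha := inv_sqrt_sq _ HN). assert (Hb := inv_sqrt_sq _ HM).
  set (a := / sqrt (INR Nc)) in *. set (b := / sqrt (INR M)) in *.
  unfold Omega, VM, cexpi, Cmult, Cconj, RtoC. fold a b.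
  unfold scal; simpl. unfold prod_scal; simpl. unfold scal; simpl. unfold mult; simpl.
  apply injective_projections; simpl;
  match goal with |- _ = ?R => transitivity ((a * a * INR Nc) * (b * b * INR M) * R) end;
  try (rewrite Ha, Hb; ring); ring.
Qed.

Theorem proposition1 (Nc Ng : nat) (Ts : R) (S : R -> R -> R) :
  (0 < Ng)%nat -> (Ng <= Nc)%nat -> 0 < Ts ->
  (forall theta q, - (PI / 2) <= theta <= PI / 2 -> (q < Ng)%nat ->
     0 <= S theta (INR q * Ts)) ->
  (exists B, forall theta q, - (PI / 2) <= theta <= PI / 2 -> (q < Ng)%nat ->
     Rabs (S theta (INR q * Ts)) <= B) ->
  (forall q, (q < Ng)%nat ->
     ex_RInt (fun theta => S theta (INR q * Ts)) (- (PI / 2)) (PI / 2)) ->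
  forall i j : nat,
    filterlim (fun M : nat => Cminus (Rk M Nc Ng Ts S i j) (Rk_approx M Nc Ng Ts S i j))
      eventually (locally (RtoC 0)).
Proof.
  intros HNg HNgc HTs Hpos _ Hint i j.
  assert (Hab : - (PI/2) < PI/2) by (generalize PI_RGT_0; lra).
  set (L := sum_n (fun q => RInt (V := C_R_CompleteNormedModule) (Hq S Ts i j q) (- (PI/2)) (PI/2)) (Ng - 1)).
  set (s := fun M => sum_n (fun q => sum_n (fun m => scal (theta_grid M (Nat.succ m) - theta_grid M m)
                (Hq S Ts i j q (theta_grid M m))) (M - 1)) (Ng - 1)).
  assert (Hs : filterlim s eventually (locally L)).
  { apply (lim_sum_n (V := C_R_NormedModule)). intros q Hq'.
    apply (RS_conv (V := C_R_NormedModule) (Hq S Ts i j q) (- (PI/2)) (PI/2) _ (fun M m => theta_grid M m)).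
    - exact Hab.
    - apply (RInt_correct (V := C_R_CompleteNormedModule)). apply Hq_ex, Hint. lia.
    - intros M. exact (th_0 M).
    - intros M HM. exact (th_M M HM).
    - intros M m Hm. exact (th_mono M m Hm).
    - intros d. exact (th_step d). }
  apply filterlim_locally. intros eps.
  assert (E1 := proj1 (filterlim_locally _ _) Hs eps).
  assert (E2 : eventually (fun M : nat => (i < M)%nat /\ (j < M)%nat)).
  { exists (i + j + 1)%nat. intros M HM. split; lia. }
  generalize (filter_and _ _ E1 E2). apply filter_imp.
  intros M [Hb [Hi Hj]].
  assert (ER : Rk M Nc Ng Ts S i j = L).
  { unfold Rk, L. apply (@sum_n_ext C_AbelianMonoid). intros q. apply (RInt_ext (V := C_R_CompleteNormedModule)). intros t _.
    apply integrand_eq; assumption. }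
  assert (EA : Rk_approx M Nc Ng Ts S i j = s M).
  { rewrite approx_eq, (sum_reindex (G := C_AbelianMonoid) (F_term M Nc Ts S i j)) by lia. unfold s.
    apply (@sum_n_ext_loc C_AbelianMonoid). intros q Hq'. apply (@sum_n_ext_loc C_AbelianMonoid). intros m Hm.
    apply term_eq; lia. }
  rewrite ER, EA. revert Hb. generalize (s M). intros z.
  destruct L as [l1 l2]. destruct z as [z1 z2].
  intros [H1 H2]. split.
  - revert H1. unfold ball; simpl. unfold AbsRing_ball, abs, minus, plus, opp; simpl.
    intros H1. replace (l1 + - z1 + - 0) with (- (z1 + - l1)) by ring. rewrite Rabs_Ropp. exact H1.
  - revert H2. unfold ball; simpl. unfold AbsRing_ball, abs, minus, plus, opp; simpl.
    intros H2. replace (l2 + - z2 + - 0) with (- (z2 + - l2)) by ring. rewrite Rabs_Ropp. exact H2.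
Qed.
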